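(* Let $g(n,K_3,\emptyset)$ denote the score of the Constructor-Blocker game on $K_n$ in which Constructor has no restriction (no forbidden subgraph) and the score is the number of triangles in Constructor's graph. Then, as $n\to\infty$, $$g(n,K_3,\emptyset)=(1+o(1))\frac{n^3}{48}.$$
   Context: Constructor-Blocker game: given graphs $H$ and $F$ (or a family $\mathcal{F}$, possibly empty), two players, Constructor and Blocker, alternately claim previously unclaimed edges of the complete graph $K_n$, Constructor moving first. Constructor may only claim an edge if her graph (the edges she has claimed) remains $F$-free (contains no subgraph isomorphic to a member of $\mathcal{F}$); Blocker may claim any unclaimed edge. The game ends when Constructor cannot claim any more edges or all edges are claimed. The score is the number of copies of $H$ in Constructor's graph at the end. Constructor maximizes, Blocker minimizes; $g(n,H,\mathcal{F})$ denotes the score under optimal play by both. With $\mathcal{F}=\emptyset$ there is no restriction on Constructor. *)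

(* Defs.v *)
From mathcomp Require Import all_boot all_order all_algebra.
Set Implicit Arguments. Unset Strict Implicit. Unset Printing Implicit Defensive.

Section Game.
Variable n : nat.

Definition is_edge (e : {set 'I_n}) : bool := #|e| == 2.

Definition triangles (G : {set {set 'I_n}}) : nat :=
  #|[set T : {set 'I_n} | (#|T| == 3) &&
       [forall e : {set 'I_n}, (is_edge e && (e \subset T)) ==> (e \in G)]]|.

Definition free (C B : {set {set 'I_n}}) : {set {set 'I_n}} :=
  [set e | is_edge e && (e \notin C) && (e \notin B)].

(* A trivial upper bound on any score (triangles are subsets of 'I_n);
   used only as the neutral element of the minimum over Blocker's moves. *)
Definition score_top : nat := #|[set: {set 'I_n}]|.

(* With F empty, Constructor's legal moves are all free edges;
   the game ends when no edge is free. *)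
Fixpoint game_val (k : nat) (ct : bool) (C B : {set {set 'I_n}}) : nat :=
  match k with
  | 0 => triangles C
  | k'.+1 =>
    if free C B == set0 then triangles C
    else if ct then \max_(e in free C B) game_val k' false (e |: C) B
    else \big[minn/score_top]_(e in free C B) game_val k' true C (e |: B)
  end.

End Game.

(* g(n, K_3, emptyset): each move claims a free edge, so 'C(n,2) moves of fuel
   suffice to play the game to its end. *)
Definition g_K3 (n : nat) : nat := @game_val n 'C(n, 2) true set0 set0.

(* Main.v *)
Require Import Defs.
From mathcomp Require Import all_boot all_order all_algebra.
From mathcomp Require Import zify ring lra.
Set Implicit Arguments. Unset Strict Implicit. Unset Printing Implicit Defensive.

Section Pot.
Variable n : nat.
Local Notation vset := {set 'I_n}.
Local Notation eset := {set {set 'I_n}}.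
Implicit Types (C B : eset) (b c e T : vset).

Definition alive (B : eset) (T : vset) : bool :=
  [forall e : vset, (is_edge e && (e \subset T)) ==> (e \notin B)].
Definition cnt (C : eset) (T : vset) : nat :=
  #|[set e : vset | is_edge e && (e \subset T) && (e \in C)]|.
Definition wt (C B : eset) (T : vset) : nat :=
  if alive B T then 2 ^ cnt C T else 0.
Definition Pot (C B : eset) : nat := \sum_(T : vset | #|T| == 3) wt C B T.
Definition wgt (C B : eset) (c : vset) : nat :=
  \sum_(T : vset | (#|T| == 3) && (c \subset T)) wt C B T.

Lemma cnt_add C c T : is_edge c -> c \notin C ->
  cnt (c |: C) T = cnt C T + (c \subset T).
Proof.
move=> ec cC; rewrite /cnt; case: (boolP (c \subset T)) => cT.
  have -> : [set e : vset | is_edge e && (e \subset T) && (e \in c |: C)] =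
     c |: [set e : vset | is_edge e && (e \subset T) && (e \in C)].
    apply/setP => e; rewrite !inE; case: (eqVneq e c) => [->|_] /=.
      by rewrite ec cT.
    by [].
  by rewrite cardsU1 inE (negbTE cC) !andbF addnC.
rewrite addn0; apply: eq_card => e; rewrite !inE.
case: (eqVneq e c) => [->|_] /=; last by [].
by rewrite (negbTE cT) !andbF.
Qed.

Lemma alive_add B b T : is_edge b ->
  alive (b |: B) T = alive B T && ~~ (b \subset T).
Proof.
move=> eb; rewrite /alive; apply/forallP/andP => [H|[/forallP H nb] e].
  split.
    apply/forallP => e; apply/implyP => He.
    by move: (H e) => /implyP /(_ He); rewrite in_setU1 negb_or => /andP[_ ->].
  apply/negP => bT; move: (H b) => /implyP; rewrite eb bT /=.
  by rewrite in_setU1 eqxx => /(_ isT).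
apply/implyP => /andP[ee eT]; rewrite in_setU1 negb_or.
have := H e; rewrite ee eT /= => ->; rewrite andbT.
by apply/eqP => ebb; rewrite -ebb eT in nb.
Qed.

Lemma wt_addC C B c T : is_edge c -> c \notin C ->
  wt (c |: C) B T = wt C B T * 2 ^ (c \subset T).
Proof.
move=> ec cC; rewrite /wt cnt_add // expnD.
by case: (alive B T).
Qed.

Lemma wt_addB C B b T : is_edge b ->
  wt C (b |: B) T = if b \subset T then 0 else wt C B T.
Proof.
move=> eb; rewrite /wt alive_add //.
by case: (b \subset T); rewrite ?andbF ?andbT.
Qed.

Lemma edges3 (T : vset) : #|T| == 3 ->
  #|[set e : vset | is_edge e && (e \subset T)]| = 3.
Proof.
move=> /eqP T3.
have -> : [set e : vset | is_edge e && (e \subset T)] =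
          [set e : vset | (e \subset T) & #|e| == 2].
  by apply/setP => e; rewrite !inE /is_edge andbC.
by rewrite cards_draws T3.
Qed.

Lemma cnt_le3 C T : #|T| == 3 -> cnt C T <= 3.
Proof.
move=> T3; rewrite -(edges3 T3) /cnt; apply: subset_leq_card.
by apply/subsetP => e; rewrite !inE => /andP[-> _].
Qed.

Lemma wt_le8 C B T : #|T| == 3 -> wt C B T <= 8.
Proof.
move=> T3; rewrite /wt; case: (alive B T) => //.
by apply: (@leq_pexp2l 2 _ 3) => //; apply: cnt_le3.
Qed.

Lemma Pot_addC C B c : is_edge c -> c \notin C ->
  Pot (c |: C) B = Pot C B + wgt C B c.
Proof.
move=> ec cC; rewrite /Pot /wgt.
rewrite (bigID (fun T => c \subset T)) [X in _ = X + _](bigID (fun T => c \subset T)) /=.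
rewrite -addnA [X in _ = _ + X]addnC addnA; congr (_ + _).
  rewrite -big_split /=; apply: eq_bigr => T /andP[_ cT].
  by rewrite wt_addC // cT muln2 addnn.
by apply: eq_bigr => T /andP[_ /negbTE cT]; rewrite wt_addC // cT muln1.
Qed.

Lemma Pot_addB C B b : is_edge b ->
  Pot C (b |: B) + wgt C B b = Pot C B.
Proof.
move=> eb; rewrite /Pot /wgt.
rewrite (bigID (fun T => b \subset T)) [X in _ = X](bigID (fun T => b \subset T)) /=.
rewrite big1; last by move=> T /andP[_ bT]; rewrite wt_addB // bT.
rewrite add0n addnC; congr (_ + _).
by apply: eq_bigr => T /andP[_ /negbTE bT]; rewrite wt_addB // bT.
Qed.

Lemma wgt_addB C B b c : is_edge b -> wgt C (b |: B) c <= wgt C B c.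
Proof.
move=> eb; apply: leq_sum => T _; rewrite wt_addB //; by case: ifP.
Qed.

Lemma union3 (b c : vset) : is_edge b -> is_edge c -> b != c -> 3 <= #|b :|: c|.
Proof.
move=> /eqP b2 /eqP c2 bc; rewrite cardsU b2 c2.
suff : #|b :&: c| <= 1 by lia.
rewrite leqNgt; apply/negP => h.
have e1 : b :&: c == b by rewrite eqEcard subsetIl b2.
have e2 : b :&: c == c by rewrite eqEcard subsetIr c2.
by move: bc; rewrite -(eqP e1) -{2}(eqP e2) eqxx.
Qed.

Lemma wgt_addC C B b c : is_edge b -> is_edge c -> b != c -> c \notin C ->
  wgt (c |: C) B b <= wgt C B b + 8.
Proof.
move=> eb ec bc cC; rewrite /wgt.
rewrite (bigID (fun T => c \subset T)) [X in _ <= X + _](bigID (fun T => c \subset T)) /=.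
have E1 : \sum_(i : vset | ((#|i| == 3) && (b \subset i)) && (c \subset i)) wt (c |: C) B i
   = \sum_(i : vset | ((#|i| == 3) && (b \subset i)) && (c \subset i)) wt C B i +
     \sum_(i : vset | ((#|i| == 3) && (b \subset i)) && (c \subset i)) wt C B i.
  rewrite -big_split /=; apply: eq_bigr => T /andP[_ cT].
  by rewrite wt_addC // cT muln2 addnn.
have E2 : \sum_(i : vset | ((#|i| == 3) && (b \subset i)) && ~~ (c \subset i)) wt (c |: C) B i
   = \sum_(i : vset | ((#|i| == 3) && (b \subset i)) && ~~ (c \subset i)) wt C B i.
  by apply: eq_bigr => T /andP[_ /negbTE cT]; rewrite wt_addC // cT muln1.
rewrite E1 E2.
set S := \sum_(i : vset | ((#|i| == 3) && (b \subset i)) && (c \subset i)) wt C B i.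
suff : S <= 8.
  move=> h.
  set R := \sum_(i : vset | ((#|i| == 3) && (b \subset i)) && ~~ (c \subset i)) wt C B i.
  lia.
rewrite /S big_mkcond /= (bigD1 (b :|: c)) //= big1 ?addn0.
  by case: ifP => // /andP[/andP[T3 _] _]; apply: wt_le8.
move=> T TU; case: ifP => // /andP[/andP[T3 bT] cT]; exfalso.
move/negP: TU; apply; rewrite eq_sym eqEcard subUset bT cT (eqP T3) /=.
exact: union3.
Qed.


Definition tris (C : eset) : {set vset} :=
  [set T : vset | (#|T| == 3) &&
       [forall e : vset, (is_edge e && (e \subset T)) ==> (e \in C)]].

Lemma tri_le_Pot C B : (forall e, e \in C -> e \notin B) ->
  8 * triangles C <= Pot C B.
Proof.
move=> dis; rewrite /triangles -/(tris C) mulnC -sum_nat_const /Pot.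
rewrite big_mkcond [X in _ <= X]big_mkcond /=; apply: leq_sum => T _.
rewrite inE; case: ifP => //= /andP[T3 /forallP H]; rewrite T3.
have al : alive B T.
  by apply/forallP => e; apply/implyP => He; apply: dis; move/implyP: (H e); apply.
rewrite /wt al.
have -> : cnt C T = 3.
  rewrite /cnt -(edges3 T3); apply: eq_card => e; rewrite !inE.
  case Ee: (is_edge e && (e \subset T)) => //=.
  by move/implyP: (H e); rewrite Ee => ->.
by [].
Qed.

Lemma Pot_le_tri C B : Defs.free C B = set0 -> Pot C B <= 8 * triangles C.
Proof.
move=> fe; rewrite /triangles -/(tris C) mulnC -sum_nat_const /Pot.
rewrite big_mkcond [X in _ <= X]big_mkcond /=; apply: leq_sum => T _.
case: ifP => // T3; rewrite /wt; case: ifP => // al.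
rewrite inE T3 /=.
have -> : [forall e : vset, (is_edge e && (e \subset T)) ==> (e \in C)].
  apply/forallP => e; apply/implyP => He.
  move/forallP: al => /(_ e) /implyP /(_ He) eB.
  apply/negPn/negP => eC.
  have : e \in Defs.free C B by rewrite inE -andbA (andP He).1 eC eB.
  by rewrite fe inE.
by apply: (@leq_pexp2l 2 _ 3) => //; apply: cnt_le3.
Qed.

Lemma Pot00 : Pot set0 set0 = 'C(n, 3).
Proof.
rewrite /Pot; have := card_draws ('I_n) 3; rewrite card_ord => <-; rewrite -sum1_card.
apply: eq_big => T; first by rewrite inE.
move=> _; rewrite /wt.
have -> : alive set0 T by apply/forallP => e; rewrite inE implybT.
rewrite /cnt.
have -> : [set e : vset | is_edge e && (e \subset T) && (e \in set0)] = set0.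
  by apply/setP => e; rewrite !inE andbF.
by rewrite cards0.
Qed.

Lemma wgt_le C B c : is_edge c -> wgt C B c <= 8 * n.
Proof.
move=> /eqP c2; rewrite /wgt.
apply: (@leq_trans (\sum_(T : vset | (#|T| == 3) && (c \subset T)) 8)).
  by apply: leq_sum => T /andP[T3 _]; apply: wt_le8.
rewrite sum_nat_const mulnC leq_mul2l /=.
apply: (@leq_trans #|[set c :|: [set x] | x : 'I_n]|); last first.
  by apply: leq_trans (leq_imset_card _ _) _; rewrite card_ord.
apply: subset_leq_card; apply/subsetP => T; rewrite unfold_in /= => /andP[/eqP T3 cT].
have : #|T :\: c| == 1.
  by rewrite cardsD (setIidPr cT) T3 c2.
move=> /cards1P [x Ex]; apply/imsetP; exists x; first by [].
by rewrite -Ex -{1}(setID T c) (setIidPr cT).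
Qed.

Lemma Pot_le_top C B : Pot C B <= 8 * score_top n.
Proof.
rewrite /Pot /score_top cardsT.
apply: (@leq_trans (\sum_(T : vset) 8)).
  rewrite big_mkcond /=; apply: leq_sum => T _; case: ifP => // T3.
  exact: wt_le8.
by rewrite sum_nat_const mulnC.
Qed.

Lemma in_free C B e : (e \in Defs.free C B) = [&& is_edge e, e \notin C & e \notin B].
Proof. by rewrite inE andbA. Qed.

Lemma free_addC C B c : c \in Defs.free C B -> Defs.free (c |: C) B = Defs.free C B :\ c.
Proof.
move=> _; apply/setP => e; rewrite !inE.
by case: (eqVneq e c) => [->|] //=; rewrite !andbF.
Qed.

Lemma free_addB C B b : b \in Defs.free C B -> Defs.free C (b |: B) = Defs.free C B :\ b.
Proof.
move=> _; apply/setP => e; rewrite !inE.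
by case: (eqVneq e b) => [->|] //=; rewrite !andbF.
Qed.

Lemma card_free_addC C B c : c \in Defs.free C B ->
  #|Defs.free (c |: C) B| = #|Defs.free C B| - 1.
Proof. by move=> cf; rewrite free_addC // (cardsD1 c (Defs.free C B)) cf add1n subn1. Qed.

Lemma card_free_addB C B b : b \in Defs.free C B ->
  #|Defs.free C (b |: B)| = #|Defs.free C B| - 1.
Proof. by move=> cf; rewrite free_addB // (cardsD1 b (Defs.free C B)) cf add1n subn1. Qed.

Lemma bigmin_le_seq (r : seq vset) (P : pred vset) (f : vset -> nat) t x :
  x \in r -> P x -> \big[minn/t]_(e <- r | P e) f e <= f x.
Proof.
elim: r => //= y s IH; rewrite inE big_cons => /orP[/eqP<- ->|/IH h Px].
  exact: geq_minl.
case: ifP => _; last exact: h Px.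
exact: leq_trans (geq_minr _ _) (h Px).
Qed.

Lemma bigmin_le (A : {set vset}) (f : vset -> nat) t x : x \in A ->
  \big[minn/t]_(e in A) f e <= f x.
Proof. by apply: bigmin_le_seq; rewrite mem_index_enum. Qed.

Lemma gv_term k ct C B : Defs.free C B = set0 -> game_val k ct C B = triangles C.
Proof. by case: k => //= k ->; rewrite eqxx. Qed.

Definition Mx C B := \max_(c in Defs.free C B) wgt C B c.

Definition dis C B := forall e, e \in C -> e \notin B.

Lemma dis_addC C B c : dis C B -> c \in Defs.free C B -> dis (c |: C) B.
Proof.
move=> d; rewrite in_free => /and3P[_ _ cB] e; rewrite in_setU1 => /orP[/eqP->//|].
exact: d.
Qed.

Lemma dis_addB C B b : dis C B -> b \in Defs.free C B -> dis C (b |: B).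
Proof.
move=> d; rewrite in_free => /and3P[_ bC _] e eC; rewrite in_setU1 negb_or d // andbT.
by apply/eqP => eb; rewrite -eb eC in bC.
Qed.

Lemma upper k : forall C B, dis C B ->
  8 * game_val k false C B <= Pot C B /\
  8 * game_val k true C B <= Pot C B + Mx C B.
Proof.
elim: k => [|k IH] C B d.
  by rewrite /=; split; [apply: tri_le_Pot | apply: leq_trans (tri_le_Pot d) (leq_addr _ _)].
rewrite /=; case: ifP => [_|/negbT fne].
  by split; [apply: tri_le_Pot | apply: leq_trans (tri_le_Pot d) (leq_addr _ _)].
have fpos : 0 < #|Defs.free C B| by rewrite card_gt0.
split.
  have [b bf Eb] := eq_bigmax_cond (wgt C B) fpos.
  have eb : is_edge b by move: bf; rewrite in_free => /and3P[].
  apply: leq_trans (_ : 8 * game_val k true C (b |: B) <= _).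
    by rewrite leq_mul2l bigmin_le ?orbT.
  apply: leq_trans (IH C (b |: B) (dis_addB d bf)).2 _.
  rewrite -(Pot_addB C B eb) leq_add2l.
  apply/bigmax_leqP => c cf.
  have cf' : c \in Defs.free C B.
    by move: cf; rewrite free_addB // in_setD1 => /andP[].
  apply: leq_trans (wgt_addB _ _ _ eb) _.
  by rewrite /Mx in Eb; rewrite -Eb (leq_bigmax_cond c cf').
have [c cf Ec] := eq_bigmax_cond (fun c => game_val k false (c |: C) B) fpos.
rewrite Ec.
have /and3P[ec cC _] : [&& is_edge c, c \notin C & c \notin B] by rewrite -in_free.
apply: leq_trans (IH (c |: C) B (dis_addC d cf)).1 _.
by rewrite Pot_addC // leq_add2l /Mx (leq_bigmax_cond c cf).
Qed.

Lemma sub11 (a k : nat) : a - 1 <= k.+1 -> a - 1 - 1 <= k.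
Proof. lia. Qed.

Lemma arith_step {P' wcb Pcb P wc wbb gv F : nat} :
  P' + wcb = Pcb -> Pcb = P + wc -> wcb <= wbb + 8 -> wbb <= wc -> 2 <= F ->
  P' <= 8 * gv + 4 * (F - 1 - 1) -> P <= 8 * gv + 4 * F.
Proof. lia. Qed.

Lemma lower k : forall C B, dis C B -> #|Defs.free C B| <= k ->
  Pot C B <= 8 * game_val k true C B + 4 * #|Defs.free C B|.
Proof.
elim/ltn_ind: k => k IH C B d hk.
case: (eqVneq (Defs.free C B) set0) => [fe|fne].
  by rewrite gv_term // fe cards0 addn0; apply: Pot_le_tri.
have fpos : 0 < #|Defs.free C B| by rewrite card_gt0.
case: k IH hk => [|k] IH hk; first by move: fpos hk; case: #|_|.
rewrite /= (negbTE fne).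
have [c cf Ec] := eq_bigmax_cond (wgt C B) fpos.
have /and3P[ec cC cB] : [&& is_edge c, c \notin C & c \notin B] by rewrite -in_free.
apply: (@leq_trans (8 * game_val k false (c |: C) B + 4 * #|Defs.free C B|)); last first.
  by rewrite leq_add2r leq_mul2l (leq_bigmax_cond c cf) orbT.
have hk' : #|Defs.free (c |: C) B| <= k by rewrite card_free_addC //; lia.
case: (eqVneq (Defs.free (c |: C) B) set0) => [fe'|fne'].
  rewrite gv_term //; apply: leq_trans (leq_addr _ _).
  apply: leq_trans (Pot_le_tri fe'); rewrite Pot_addC //; exact: leq_addr.
have fpos' : 0 < #|Defs.free (c |: C) B| by rewrite card_gt0.
case: k IH hk hk' => [|k] IH hk hk'; first by move: fpos' hk'; case: #|_|.
rewrite /= (negbTE fne').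
set F := #|Defs.free C B|.
elim/big_ind: _.
- apply: leq_trans (Pot_le_top C B) _; exact: leq_addr.
- move=> x y hx hy; rewrite /minn; by case: ifP.
move=> b bf.
have bf0 : b \in Defs.free C B by move: bf; rewrite free_addC // in_setD1 => /andP[].
have /and3P[eb bC bB] : [&& is_edge b, b \notin c |: C & b \notin B] by rewrite -in_free.
have bc : b != c by move: bf; rewrite free_addC // in_setD1 => /andP[].
have hk2 : #|Defs.free (c |: C) (b |: B)| <= k.
  rewrite (card_free_addB bf) (card_free_addC cf).
  rewrite (card_free_addC cf) in hk'.
  exact: sub11 hk'.
have := IH k (ltnW (ltnSn _)) _ _ (dis_addB (dis_addC d cf) bf) hk2.
rewrite card_free_addB // card_free_addC // -/F.
have E1 := Pot_addB (c |: C) B eb.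
have E2 := Pot_addC B ec cC.
have E3 := wgt_addC B eb ec bc cC.
have E4 : wgt C B b <= wgt C B c by rewrite -Ec (leq_bigmax_cond b bf0).
have F2 : 2 <= F.
  rewrite /F (cardsD1 c) cf (cardsD1 b (Defs.free C B :\ c)).
  by rewrite -free_addC // bf.
move=> H; exact: (arith_step E1 E2 E3 E4 F2 H).
Qed.

End Pot.

Lemma dis00 n : dis (set0 : {set {set 'I_n}}) set0.
Proof. by move=> e; rewrite inE. Qed.

Lemma free00 n : #|@Defs.free n set0 set0| = 'C(n, 2).
Proof.
have := card_draws ('I_n) 2; rewrite card_ord => <-.
by apply: eq_card => e; rewrite !inE /is_edge !andbT.
Qed.

Lemma g_upper n : 8 * g_K3 n <= 'C(n, 3) + 8 * n.
Proof.
rewrite /g_K3; have H := (upper 'C(n, 2) (@dis00 n)).2; apply: leq_trans H _.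
rewrite Pot00 leq_add2l; apply/bigmax_leqP => c cf.
by apply: wgt_le; move: cf; rewrite in_free => /and3P[].
Qed.

Lemma g_lower n : 'C(n, 3) <= 8 * g_K3 n + 4 * 'C(n, 2).
Proof.
rewrite /g_K3 -Pot00 -{2}(free00 n); apply: lower; first exact: (@dis00 n).
by rewrite free00.
Qed.

Lemma bin3E n : 6 * 'C(n, 3) = n * n.-1 * n.-2.
Proof.
have := bin_ffact n 3; rewrite !ffactnS ffactn0 /= => h.
by rewrite mulnC h muln1 mulnA.
Qed.

Lemma bin2E n : 2 * 'C(n, 2) = n * n.-1.
Proof.
have := bin_ffact n 2; rewrite !ffactnS ffactn0 /= => h.
by rewrite mulnC h muln1.
Qed.

Lemma g_nat m : 48 * g_K3 m.+2 <= m.+2 ^ 3 + 63 * m.+2 ^ 2 /\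
                m.+2 ^ 3 <= 48 * g_K3 m.+2 + 63 * m.+2 ^ 2.
Proof.
have U := g_upper m.+2; have L := g_lower m.+2.
have B3 := bin3E m.+2; have B2 := bin2E m.+2.
rewrite /= in B3 B2.
set g := g_K3 m.+2 in U L *.
move: U L B3 B2; set c3 := 'C(_, 3); set c2 := 'C(_, 2).
move=> U L B3 B2; split; nia.
Qed.

Import Order.TTheory GRing.Theory Num.Theory.
Local Open Scope ring_scope.

Lemma fin_arith (G a b ea : rat) : a <= 48 * G + 63 * b -> 48 * G <= a + 63 * b ->
  63 * b < ea -> (- ea < 48 * G - a) && (48 * G - a < ea).
Proof. move=> h1 h2 h3; apply/andP; split; lra. Qed.
Lemma h2l (eps X : rat) : 0 < X -> 63 < eps * X -> 63 * X ^+ 2 < eps * X ^+ 3.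
Proof.
move=> Xp h.
have -> : eps * X ^+ 3 = (eps * X) * X ^+ 2 by rewrite exprS; ring.
rewrite ltr_pM2r; first exact: h.
exact: exprn_gt0.
Qed.

Theorem theorem1p1 :
  forall eps : rat, 0 < eps ->
  exists N : nat, forall n : nat, (N <= n)%N ->
    `| (g_K3 n)%:R / ((n%:R) ^+ 3 / 48) - 1 | < eps.
Proof.
move=> eps eps0.
set K := Num.Def.archi_bound (63 / eps).
exists (maxn 2 K) => n; rewrite geq_max => /andP[n2 nK].
have [m Em] : exists m, n = m.+2 by exists n.-2; lia.
have [U L] := g_nat m.
rewrite -Em in U L.
move: U L; set x := g_K3 n => U L.
have U' : 48 * (x%:R : rat) <= n%:R ^+ 3 + 63 * n%:R ^+ 2.
  by move: U; rewrite -(ler_nat rat) natrD !natrM !exprS expr0 !mulr1.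
have L' : (n%:R : rat) ^+ 3 <= 48 * x%:R + 63 * n%:R ^+ 2.
  by move: L; rewrite -(ler_nat rat) natrD !natrM !exprS expr0 !mulr1.
set X : rat := n%:R in U' L' *.
set G : rat := x%:R in U' L' *.
have Xpos : 0 < X by rewrite /X ltr0n; lia.
have hb : 63 / eps < X.
  have h0 : 0 <= 63 / eps by apply: divr_ge0; [rewrite ler0n | exact: ltW].
  apply: lt_le_trans (archi_boundP h0) _.
  by rewrite /X ler_nat.
have h63 : 63 < eps * X by rewrite mulrC -ltr_pdivrMr.
have X3 : 0 < X ^+ 3 by rewrite exprn_gt0.
have h2 := h2l Xpos h63.
have E : G / (X ^+ 3 / 48) - 1 = (48 * G - X ^+ 3) / X ^+ 3.
  by field; apply: lt0r_neq0; exact: Xpos.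
rewrite E ltr_norml.
rewrite (ltr_pdivlMr _ _ X3) (ltr_pdivrMr _ _ X3) mulNr.
exact: fin_arith L' U' h2.
Qed.
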